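(* Let $(X,d)$ be a path-connected metric space, $x_0\in X$, $n\geq 1$. The map $\pi:\Omega^n(X,x_0)\to\pi_n(X,x_0)$, $\pi(\alpha)=[\alpha]$, is continuous when $\pi_n(X,x_0)$ carries the topology induced by $\rho$. Consequently, the quotient topology and the $\tau$-topology on $\pi_n(X,x_0)$ are each at least as fine as the topology induced by $\rho$.
   Context: $\Omega^n(X,x_0)$ is the set of continuous maps $\alpha:[0,1]^n\to X$ with $\alpha(\partial[0,1]^n)=\{x_0\}$, with uniform metric $\mu(\alpha,\beta)=\sup_t d(\alpha(t),\beta(t))$ (equivalently the compact-open topology). $\rho(a,b)=\inf\{\mu(\alpha,\beta)\mid\alpha\in a,\beta\in b\}$ is a pseudometric on $\pi_n(X,x_0)$. The quotient topology on $\pi_n(X,x_0)$ is the finest topology making $\pi$ continuous. The $\tau$-topology is the finest group topology on $\pi_n(X,x_0)$ making $\pi$ continuous (equivalently, the finest group topology coarser than the quotient topology). *)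

(* Defs.v *)
From Stdlib Require Import Reals.
From Coquelicot Require Import Coquelicot.
Open Scope R_scope.

Definition is_metric {X : Type} (d : X -> X -> R) : Prop :=
  (forall x y, 0 <= d x y) /\
  (forall x y, d x y = 0 <-> x = y) /\
  (forall x y, d x y = d y x) /\
  (forall x y z, d x z <= d x y + d y z).

Definition path_connected {X : Type} (d : X -> X -> R) : Prop :=
  forall x y : X, exists p : R -> X,
    p 0 = x /\ p 1 = y /\
    (forall s, 0 <= s <= 1 -> forall eps, 0 < eps -> exists del, 0 < del /\
       forall s', 0 <= s' <= 1 -> Rabs (s' - s) < del -> d (p s') (p s) < eps).

(** The cube [0,1]^n: points t : nat -> R with t i in [0,1] for i < n and
    t i = 0 for i >= n (so that each point has a unique representative). *)
Definition cube (n : nat) : Type :=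
  {t : nat -> R | forall i, ((i < n)%nat -> 0 <= t i <= 1) /\ ((n <= i)%nat -> t i = 0)}.

Definition cpt {n : nat} (t : cube n) : nat -> R := proj1_sig t.

Definition on_boundary {n : nat} (t : cube n) : Prop :=
  exists i, (i < n)%nat /\ (cpt t i = 0 \/ cpt t i = 1).

Definition cube_continuous {X : Type} (d : X -> X -> R) {n : nat} (f : cube n -> X) : Prop :=
  forall (t : cube n) eps, 0 < eps -> exists del, 0 < del /\
    forall s : cube n, (forall i, (i < n)%nat -> Rabs (cpt s i - cpt t i) < del) ->
      d (f s) (f t) < eps.

Definition is_loop {X : Type} (d : X -> X -> R) (n : nat) (x0 : X) (f : cube n -> X) : Prop :=
  cube_continuous d f /\ (forall t, on_boundary t -> f t = x0).

Definition Omega {X : Type} (d : X -> X -> R) (n : nat) (x0 : X) : Type :=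
  {f : cube n -> X | is_loop d n x0 f}.

Definition oval {X : Type} {d : X -> X -> R} {n : nat} {x0 : X} (a : Omega d n x0) : cube n -> X :=
  proj1_sig a.

Definition homotopic {X : Type} (d : X -> X -> R) (n : nat) (x0 : X) (a b : Omega d n x0) : Prop :=
  exists H : cube n -> R -> X,
    (forall (t : cube n) s eps, 0 <= s <= 1 -> 0 < eps -> exists del, 0 < del /\
       forall (t' : cube n) s', 0 <= s' <= 1 ->
         (forall i, (i < n)%nat -> Rabs (cpt t' i - cpt t i) < del) ->
         Rabs (s' - s) < del -> d (H t' s') (H t s) < eps) /\
    (forall t, H t 0 = oval a t) /\
    (forall t, H t 1 = oval b t) /\
    (forall t s, 0 <= s <= 1 -> on_boundary t -> H t s = x0).

Definition pin {X : Type} (d : X -> X -> R) (n : nat) (x0 : X) : Type :=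
  {A : Omega d n x0 -> Prop | exists a, A = homotopic d n x0 a}.

Definition pmem {X : Type} {d : X -> X -> R} {n : nat} {x0 : X}
  (A : pin d n x0) (a : Omega d n x0) : Prop := proj1_sig A a.

Definition piproj {X : Type} (d : X -> X -> R) (n : nat) (x0 : X) (a : Omega d n x0) : pin d n x0 :=
  exist _ (homotopic d n x0 a) (ex_intro _ a eq_refl).

Definition mu {X : Type} {d : X -> X -> R} {n : nat} {x0 : X} (a b : Omega d n x0) : Rbar :=
  Lub_Rbar (fun r => exists t : cube n, r = d (oval a t) (oval b t)).

Definition rho {X : Type} {d : X -> X -> R} {n : nat} {x0 : X} (A B : pin d n x0) : Rbar :=
  Glb_Rbar (fun r => exists a b, pmem A a /\ pmem B b /\ mu a b = Finite r).

Definition Omega_open {X : Type} (d : X -> X -> R) (n : nat) (x0 : X)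
  (V : Omega d n x0 -> Prop) : Prop :=
  forall a, V a -> exists eps, 0 < eps /\ forall b, Rbar_lt (mu a b) (Finite eps) -> V b.

Definition rho_open {X : Type} (d : X -> X -> R) (n : nat) (x0 : X)
  (U : pin d n x0 -> Prop) : Prop :=
  forall A, U A -> exists eps, 0 < eps /\ forall B, Rbar_lt (rho A B) (Finite eps) -> U B.

Definition quotient_open {X : Type} (d : X -> X -> R) (n : nat) (x0 : X)
  (U : pin d n x0 -> Prop) : Prop :=
  Omega_open d n x0 (fun a => U (piproj d n x0 a)).

(** Group structure on pi_n (concatenation / reversal in the first coordinate,
    coordinate index 0), stated relationally on representatives. *)
Definition is_concat {X : Type} {n : nat} (f g h : cube n -> X) : Prop :=
  forall t s : cube n, (forall i, i <> 0%nat -> cpt s i = cpt t i) ->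
    (cpt t 0 <= 1/2 -> cpt s 0 = 2 * cpt t 0 -> h t = f s) /\
    (1/2 <= cpt t 0 -> cpt s 0 = 2 * cpt t 0 - 1 -> h t = g s).

Definition is_rev {X : Type} {n : nat} (f h : cube n -> X) : Prop :=
  forall t s : cube n, (forall i, i <> 0%nat -> cpt s i = cpt t i) ->
    cpt s 0 = 1 - cpt t 0 -> h t = f s.

Definition pin_mul {X : Type} {d : X -> X -> R} {n : nat} {x0 : X}
  (A B C : pin d n x0) : Prop :=
  exists a b c, pmem A a /\ pmem B b /\ pmem C c /\ is_concat (oval a) (oval b) (oval c).

Definition pin_inv {X : Type} {d : X -> X -> R} {n : nat} {x0 : X}
  (A C : pin d n x0) : Prop :=
  exists a c, pmem A a /\ pmem C c /\ is_rev (oval a) (oval c).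

Definition is_topology {T : Type} (O : (T -> Prop) -> Prop) : Prop :=
  O (fun _ => True) /\ O (fun _ => False) /\
  (forall U V, O U -> O V -> O (fun x => U x /\ V x)) /\
  (forall S : (T -> Prop) -> Prop, (forall U, S U -> O U) -> O (fun x => exists U, S U /\ U x)).

Definition group_topology {X : Type} (d : X -> X -> R) (n : nat) (x0 : X)
  (O : (pin d n x0 -> Prop) -> Prop) : Prop :=
  is_topology O /\
  (forall A B C, pin_mul A B C -> forall W, O W -> W C ->
     exists U V, O U /\ O V /\ U A /\ V B /\
       forall A' B' C', U A' -> V B' -> pin_mul A' B' C' -> W C') /\
  (forall A C, pin_inv A C -> forall W, O W -> W C ->
     exists U, O U /\ U A /\ forall A' C', U A' -> pin_inv A' C' -> W C').

Inductive generated {T : Type} (F : (T -> Prop) -> Prop) : (T -> Prop) -> Prop :=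
| gen_base U : F U -> generated F U
| gen_full : generated F (fun _ => True)
| gen_inter U V : generated F U -> generated F V -> generated F (fun x => U x /\ V x)
| gen_union (S : (T -> Prop) -> Prop) :
    (forall U, S U -> generated F U) -> generated F (fun x => exists U, S U /\ U x).

(** tau-topology: the finest group topology making pi continuous, i.e. the join
    (topology generated by the union) of all such group topologies. *)
Definition tau_open {X : Type} (d : X -> X -> R) (n : nat) (x0 : X)
  (U : pin d n x0 -> Prop) : Prop :=
  generated (fun V => exists O, group_topology d n x0 O /\
                         (forall W, O W -> quotient_open d n x0 W) /\ O V) U.

(* Main.v *)
Require Import Defs.
From Stdlib Require Import Reals Lra Lia ProofIrrelevance FunctionalExtensionality Classical.
From Coquelicot Require Import Coquelicot.
Open Scope R_scope.

Section S.
Context {X : Type} (d : X -> X -> R) (x0 : X) (n : nat) (Hn : (1 <= n)%nat) (Hd : is_metric d).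

Definition clamp (v : R) : R := Rmax 0 (Rmin 1 v).
Lemma clamp_in v : 0 <= clamp v <= 1.
Proof. unfold clamp, Rmax, Rmin; repeat destruct Rle_dec; lra. Qed.
Lemma clamp_id v : 0 <= v <= 1 -> clamp v = v.
Proof. unfold clamp, Rmax, Rmin; repeat destruct Rle_dec; lra. Qed.
Lemma clamp_le0 v : v <= 0 -> clamp v = 0.
Proof. unfold clamp, Rmax, Rmin; repeat destruct Rle_dec; lra. Qed.
Lemma clamp_ge1 v : 1 <= v -> clamp v = 1.
Proof. unfold clamp, Rmax, Rmin; repeat destruct Rle_dec; lra. Qed.
Lemma clamp_lip u v : Rabs (clamp u - clamp v) <= Rabs (u - v).
Proof. unfold clamp, Rmax, Rmin; repeat destruct Rle_dec; unfold Rabs; repeat destruct Rcase_abs; lra. Qed.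

Definition s0fun (t : cube n) (v : R) : nat -> R :=
  fun i => match i with O => clamp v | S k => cpt t (S k) end.
Lemma s0fun_ok t v : forall i, ((i < n)%nat -> 0 <= s0fun t v i <= 1) /\ ((n <= i)%nat -> s0fun t v i = 0).
Proof.
  intros [|k]; simpl.
  - split; [intros; apply clamp_in | intros; lia].
  - destruct t as [f Hf]; simpl; apply Hf.
Qed.
Definition set0 (t : cube n) (v : R) : cube n := exist _ (s0fun t v) (s0fun_ok t v).

Lemma cube_ext (t t' : cube n) : (forall i, cpt t i = cpt t' i) -> t = t'.
Proof.
  destruct t as [f Hf], t' as [g Hg]; unfold cpt; simpl; intros H.
  assert (f = g) by (apply functional_extensionality; auto). subst.
  f_equal. apply proof_irrelevance.
Qed.
Lemma cpt_range (t : cube n) i : (i < n)%nat -> 0 <= cpt t i <= 1.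
Proof. destruct t as [f Hf]; unfold cpt; simpl; intros; apply Hf; auto. Qed.
Lemma t0_range (t : cube n) : 0 <= cpt t 0 <= 1.
Proof. apply cpt_range; lia. Qed.
Lemma cpt_set0_0 t v : cpt (set0 t v) 0 = clamp v.
Proof. reflexivity. Qed.
Lemma cpt_set0_S t v k : cpt (set0 t v) (S k) = cpt t (S k).
Proof. reflexivity. Qed.
Lemma set0_id t : set0 t (cpt t 0) = t.
Proof. apply cube_ext; intros [|k]; [apply clamp_id, t0_range | reflexivity]. Qed.
Lemma set0_set0 t v w : set0 (set0 t v) w = set0 t w.
Proof. apply cube_ext; intros [|k]; reflexivity. Qed.
Lemma set0_clamp t v : set0 t (clamp v) = set0 t v.
Proof. apply cube_ext; intros [|k]; [apply clamp_id, clamp_in | reflexivity]. Qed.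
Lemma set0_le0 t v : v <= 0 -> set0 t v = set0 t 0.
Proof. intros; apply cube_ext; intros [|k]; [rewrite !cpt_set0_0, !clamp_le0; lra | reflexivity]. Qed.
Lemma set0_ge1 t v : 1 <= v -> set0 t v = set0 t 1.
Proof. intros; apply cube_ext; intros [|k]; [rewrite !cpt_set0_0, !clamp_ge1; lra | reflexivity]. Qed.
Lemma set0_in t v : 0 <= v <= 1 -> cpt (set0 t v) 0 = v.
Proof. intros; rewrite cpt_set0_0; apply clamp_id; auto. Qed.

Lemma bnd0 t : on_boundary (set0 t 0).
Proof. exists 0%nat; split; [lia | left; rewrite cpt_set0_0; apply clamp_le0; lra]. Qed.
Lemma bnd1 t : on_boundary (set0 t 1).
Proof. exists 0%nat; split; [lia | right; rewrite cpt_set0_0; apply clamp_ge1; lra]. Qed.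

Definition bside (t : cube n) := exists i, (0 < i < n)%nat /\ (cpt t i = 0 \/ cpt t i = 1).
Lemma bside_set0 t v : bside t -> bside (set0 t v).
Proof. intros [[|k] [Hi Hc]]; [lia|]. exists (S k); split; auto. Qed.
Lemma bnd_cases t : on_boundary t -> cpt t 0 = 0 \/ cpt t 0 = 1 \/ bside t.
Proof.
  intros [[|k] [Hi Hc]]; [destruct Hc; auto|]. right; right; exists (S k); split; auto; lia.
Qed.
Lemma bside_bnd t : bside t -> on_boundary t.
Proof. intros [i [Hi Hc]]; exists i; split; auto; lia. Qed.


Definition jcont (F : cube n -> R -> X) : Prop :=
  forall (t : cube n) s eps, 0 <= s <= 1 -> 0 < eps -> exists del, 0 < del /\
       forall (t' : cube n) s', 0 <= s' <= 1 ->
         (forall i, (i < n)%nat -> Rabs (cpt t' i - cpt t i) < del) ->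
         Rabs (s' - s) < del -> d (F t' s') (F t s) < eps.
Definition bndp (F : cube n -> R -> X) := forall t s, 0 <= s <= 1 -> on_boundary t -> F t s = x0.
Definition bsidep (F : cube n -> R -> X) := forall t s, 0 <= s <= 1 -> bside t -> F t s = x0.
Definition hom (f g : cube n -> X) := exists H, jcont H /\ (forall t, H t 0 = f t) /\
   (forall t, H t 1 = g t) /\ bndp H.

Lemma hom_homotopic a b : hom (oval a) (oval b) -> homotopic d n x0 a b.
Proof. intros [H [H1 [H2 [H3 H4]]]]; exists H; auto. Qed.
Lemma homotopic_hom a b : homotopic d n x0 a b -> hom (oval a) (oval b).
Proof. intros [H [H1 [H2 [H3 H4]]]]; exists H; auto. Qed.

Lemma jcont_ext F G : (forall t s, 0 <= s <= 1 -> F t s = G t s) -> jcont F -> jcont G.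
Proof.
  intros E HF t s eps Hs He. destruct (HF t s eps Hs He) as [del [Hdel HH]].
  exists del; split; auto. intros t' s' Hs' Ht Hss. rewrite <- !E; auto.
Qed.

Lemma bndp_bsidep F : bndp F -> bsidep F.
Proof. intros H t s Hs Hb; apply H; auto; apply bside_bnd; auto. Qed.

Lemma K_jcont f : cube_continuous d f -> jcont (fun t _ => f t).
Proof.
  intros Hf t s eps Hs He; destruct (Hf t eps He) as [del [Hdel HH]].
  exists del; split; auto; intros; apply HH; auto.
Qed.
Lemma loop_jcont f : is_loop d n x0 f -> jcont (fun t _ => f t).
Proof. intros [H _]; apply K_jcont; auto. Qed.
Lemma loop_bndp f : is_loop d n x0 f -> bndp (fun t _ => f t).
Proof. intros [_ H] t s _ Hb; apply H; auto. Qed.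
Lemma loop_bsidep f : is_loop d n x0 f -> bsidep (fun t _ => f t).
Proof. intros; apply bndp_bsidep, loop_bndp; auto. Qed.

Lemma loop_slice F s0 : jcont F -> bndp F -> 0 <= s0 <= 1 -> is_loop d n x0 (fun t => F t s0).
Proof.
  intros HF HB Hs0; split.
  - intros t eps He; destruct (HF t s0 eps Hs0 He) as [del [Hdel HH]].
    exists del; split; auto; intros s' Hs'; apply HH; auto.
    rewrite Rminus_diag, Rabs_R0; auto.
  - intros t Ht; apply HB; auto.
Qed.

Lemma dist_refl x : d x x = 0.
Proof. destruct Hd as [_ [H _]]; apply H; auto. Qed.
Lemma dist_pos x y : 0 <= d x y.
Proof. destruct Hd as [H _]; apply H. Qed.

Lemma phi_bound a b c e x x' s s' :
  0 <= x <= 1 -> 0 <= x' <= 1 -> 0 <= s <= 1 -> 0 <= s' <= 1 ->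
  Rabs ((a + b*x' + c*s' + e*x'*s') - (a + b*x + c*s + e*x*s)) <=
  Rabs b * Rabs (x' - x) + Rabs c * Rabs (s' - s) + Rabs e * (Rabs (x'-x) + Rabs (s'-s)).
Proof.
  intros Hx Hx' Hs Hs'.
  replace ((a + b*x' + c*s' + e*x'*s') - (a + b*x + c*s + e*x*s)) with
    (b * (x'-x) + c * (s'-s) + e * (x' * (s'-s) + s * (x'-x))) by ring.
  eapply Rle_trans; [apply Rabs_triang|].
  eapply Rle_trans; [apply Rplus_le_compat_r, Rabs_triang|].
  rewrite !Rabs_mult.
  apply Rplus_le_compat_l. apply Rmult_le_compat_l; [apply Rabs_pos|].
  eapply Rle_trans; [apply Rabs_triang|]. rewrite !Rabs_mult.
  rewrite (Rabs_right x') by lra. rewrite (Rabs_right s) by lra.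
  pose proof (Rabs_pos (s'-s)); pose proof (Rabs_pos (x'-x)). nra.
Qed.

Lemma jcont_comp G phi psi L : jcont G ->
  (exists a b c e, forall x s, phi x s = a + b*x + c*s + e*x*s) ->
  (forall s, 0 <= s <= 1 -> 0 <= psi s <= 1) -> 0 < L ->
  (forall s s', 0 <= s <= 1 -> 0 <= s' <= 1 -> Rabs (psi s' - psi s) <= L * Rabs (s' - s)) ->
  jcont (fun t s => G (set0 t (phi (cpt t 0) s)) (psi s)).
Proof.
  intros HG [a [b [c [e Hphi]]]] Hpsi HL Hlip t s eps Hs He.
  destruct (HG (set0 t (phi (cpt t 0) s)) (psi s) eps (Hpsi s Hs) He) as [del [Hdel HH]].
  pose proof (Rabs_pos b); pose proof (Rabs_pos c); pose proof (Rabs_pos e).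
  set (M := 1 + Rabs b + Rabs c + 2 * Rabs e + L).
  assert (HM : 1 <= M) by (unfold M; lra).
  exists (del / M). split; [apply Rdiv_lt_0_compat; lra|].
  assert (Hdm : del / M * M = del) by (field; lra).
  assert (Hdm2 : del / M <= del).
  { apply Rmult_le_reg_r with M; [lra|]. rewrite Hdm. pose proof (Rdiv_lt_0_compat _ _ Hdel (Rlt_le_trans 0 1 M Rlt_0_1 HM)). nra. }
  intros t' s' Hs' Ht Hss. apply HH; [apply Hpsi; auto| |].
  - intros [|k] Hk.
    + rewrite !cpt_set0_0. eapply Rle_lt_trans; [apply clamp_lip|].
      rewrite !Hphi. pose proof (Ht 0%nat Hk) as Hz0.
      eapply Rle_lt_trans; [apply phi_bound; auto using t0_range|].
      pose proof (Rabs_pos (cpt t' 0 - cpt t 0)); pose proof (Rabs_pos (s'-s)).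
      set (u := del / M) in *. rewrite <- Hdm. unfold M. nra.
    + rewrite !cpt_set0_S. eapply Rlt_le_trans; [apply Ht; auto| auto].
  - eapply Rle_lt_trans; [apply Hlip; auto|].
    pose proof (Rabs_pos (s'-s)).
    set (u := del / M) in *. rewrite <- Hdm. unfold M. nra.
Qed.

Lemma jcont_paste h F1 F2 : (exists a b c, forall x s, h x s = a + b*x + c*s) ->
  jcont F1 -> jcont F2 ->
  (forall t s, 0 <= s <= 1 -> h (cpt t 0) s = 0 -> F1 t s = F2 t s) ->
  jcont (fun t s => if Rle_dec (h (cpt t 0) s) 0 then F1 t s else F2 t s).
Proof.
  intros [a [b [c Hh]]] H1 H2 Hseam t s eps Hs He.
  destruct (H1 t s eps Hs He) as [d1 [Hd1 P1]].
  destruct (H2 t s eps Hs He) as [d2 [Hd2 P2]].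
  pose proof (Rabs_pos b); pose proof (Rabs_pos c).
  assert (Hbound : forall (t' : cube n) s' u, 0 < u -> (forall i, (i < n)%nat -> Rabs (cpt t' i - cpt t i) < u) ->
     Rabs (s' - s) < u -> Rabs (h (cpt t' 0) s' - h (cpt t 0) s) <= (Rabs b + Rabs c) * u).
  { intros t' s' u Hu Ht Hss. rewrite !Hh.
    replace (a + b * cpt t' 0 + c * s' - (a + b * cpt t 0 + c * s)) with
       (b * (cpt t' 0 - cpt t 0) + c * (s' - s)) by ring.
    eapply Rle_trans; [apply Rabs_triang|]. rewrite !Rabs_mult.
    pose proof (Ht 0%nat ltac:(lia)). nra. }
  set (hv := h (cpt t 0) s) in *.
  destruct (Rtotal_order hv 0) as [Hlt | [Heq | Hgt]].
  - set (u := Rmin d1 (- hv / (1 + Rabs b + Rabs c))).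
    assert (Hu1 : u <= d1) by apply Rmin_l.
    assert (Hu2 : u <= - hv / (1 + Rabs b + Rabs c)) by apply Rmin_r.
    assert (Hu : 0 < u) by (apply Rmin_pos; auto; apply Rdiv_lt_0_compat; lra).
    exists u; split; auto. intros t' s' Hs' Ht Hss.
    pose proof (Hbound t' s' u Hu Ht Hss).
    assert (Hq : (1 + Rabs b + Rabs c) * u <= - hv).
    { apply Rmult_le_reg_r with (/ (1 + Rabs b + Rabs c)).
      apply Rinv_0_lt_compat; lra.
      replace ((1 + Rabs b + Rabs c) * u * / (1 + Rabs b + Rabs c)) with u by (field; lra). exact Hu2. }
    destruct (Rle_dec (h (cpt t' 0) s') 0) as [Hl|Hl];
    [| exfalso; apply Hl; pose proof (Rle_abs (h (cpt t' 0) s' - hv)); nra].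
    destruct (Rle_dec hv 0) as [_|Hl2]; [|lra].
    apply P1; auto. intros i Hi; eapply Rlt_le_trans; [apply Ht; auto| auto].
    eapply Rlt_le_trans; eauto.
  - exists (Rmin d1 d2); split; [apply Rmin_pos; auto|].
    intros t' s' Hs' Ht Hss.
    destruct (Rle_dec hv 0) as [_|Hl2]; [|lra].
    assert (Hd1' : Rmin d1 d2 <= d1) by apply Rmin_l.
    assert (Hd2' : Rmin d1 d2 <= d2) by apply Rmin_r.
    destruct (Rle_dec (h (cpt t' 0) s') 0).
    + apply P1; auto. intros i Hi; eapply Rlt_le_trans; [apply Ht; auto| auto].
      eapply Rlt_le_trans; eauto.
    + rewrite (Hseam t s Hs Heq). apply P2; auto. intros i Hi; eapply Rlt_le_trans; [apply Ht; auto| auto].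
      eapply Rlt_le_trans; eauto.
  - set (u := Rmin d2 (hv / (1 + Rabs b + Rabs c))).
    assert (Hu1 : u <= d2) by apply Rmin_l.
    assert (Hu2 : u <= hv / (1 + Rabs b + Rabs c)) by apply Rmin_r.
    assert (Hu : 0 < u) by (apply Rmin_pos; auto; apply Rdiv_lt_0_compat; lra).
    exists u; split; auto. intros t' s' Hs' Ht Hss.
    pose proof (Hbound t' s' u Hu Ht Hss).
    assert (Hq : (1 + Rabs b + Rabs c) * u <= hv).
    { apply Rmult_le_reg_r with (/ (1 + Rabs b + Rabs c)).
      apply Rinv_0_lt_compat; lra.
      replace ((1 + Rabs b + Rabs c) * u * / (1 + Rabs b + Rabs c)) with u by (field; lra). exact Hu2. }
    destruct (Rle_dec (h (cpt t' 0) s') 0) as [Hl|Hl];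
    [exfalso; pose proof (Rabs_maj2 (h (cpt t' 0) s' - hv)); nra |].
    destruct (Rle_dec hv 0) as [Hl2|_]; [lra|].
    apply P2; auto. intros i Hi; eapply Rlt_le_trans; [apply Ht; auto| auto].
    eapply Rlt_le_trans; eauto.
Qed.


Definition aff4 (phi : R -> R -> R) := exists a b c e, forall x s, phi x s = a + b*x + c*s + e*x*s.
Definition aff3 (h : R -> R -> R) := exists a b c, forall x s, h x s = a + b*x + c*s.

Lemma jcont_comp_id G phi : jcont G -> aff4 phi ->
  jcont (fun t s => G (set0 t (phi (cpt t 0) s)) s).
Proof.
  intros HG Hphi. refine (jcont_comp G phi (fun s => s) 1 HG Hphi _ _ _); auto; try lra.
  intros; rewrite Rmult_1_l; lra.
Qed.

Lemma aff4_intro phi : (forall x s, phi x s = phi 0 0 + (phi 1 0 - phi 0 0)*x + (phi 0 1 - phi 0 0)*s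
   + (phi 1 1 - phi 1 0 - phi 0 1 + phi 0 0)*x*s) -> aff4 phi.
Proof. intros H; do 4 eexists; exact H. Qed.
Lemma aff3_intro h : (forall x s, h x s = h 0 0 + (h 1 0 - h 0 0)*x + (h 0 1 - h 0 0)*s) -> aff3 h.
Proof. intros H; do 3 eexists; exact H. Qed.

Ltac aff := first [ apply aff4_intro; intros; cbv beta; ring | apply aff3_intro; intros; cbv beta; ring ].

Lemma hom_eq f g : is_loop d n x0 f -> (forall t, f t = g t) -> hom f g.
Proof.
  intros Hf E. exists (fun t _ => f t). split; [apply loop_jcont; auto|].
  split; [auto|]. split; [auto|]. apply loop_bndp; auto.
Qed.

Lemma hom_sym f g : hom f g -> hom g f.
Proof.
  intros [H [HC [H0 [H1 HB]]]].
  exists (fun t s => H t (1 - s)). split; [|split; [|split]].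
  - eapply jcont_ext; [| refine (jcont_comp H (fun x _ => x) (fun s => 1 - s) 1 HC _ _ _ _)].
    + intros t s Hs; simpl. rewrite set0_id; auto.
    + aff.
    + intros; lra.
    + lra.
    + intros. replace (1 - s' - (1 - s)) with (- (s' - s)) by ring. rewrite Rabs_Ropp; lra.
  - intros t; rewrite Rminus_0_r; auto.
  - intros t; rewrite Rminus_diag; auto.
  - intros t s Hs Hb; apply HB; auto; lra.
Qed.

Lemma clamp2_lip a s s' : Rabs (clamp (2*s' + a) - clamp (2*s + a)) <= 2 * Rabs (s' - s).
Proof.
  eapply Rle_trans; [apply clamp_lip|].
  replace (2 * s' + a - (2 * s + a)) with (2 * (s' - s)) by ring.
  rewrite Rabs_mult, Rabs_right; lra.
Qed.

Lemma hom_trans f g k : hom f g -> hom g k -> hom f k.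
Proof.
  intros [H1 [HC1 [H10 [H11 HB1]]]] [H2 [HC2 [H20 [H21 HB2]]]].
  exists (fun t s => if Rle_dec ((fun _ s => s - 1/2) (cpt t 0) s) 0 then H1 t (clamp (2*s + 0))
                     else H2 t (clamp (2*s + -1))).
  split; [|split; [|split]].
  - apply (jcont_paste (fun _ s => s - 1/2) (fun t s => H1 t (clamp (2*s + 0))) (fun t s => H2 t (clamp (2*s + -1)))).
    + aff.
    + eapply jcont_ext; [| refine (jcont_comp H1 (fun x _ => x) (fun s => clamp (2*s+0)) 2 HC1 _ _ _ _)].
      * intros t s Hs; simpl. rewrite set0_id; auto.
      * aff.
      * intros; apply clamp_in.
      * lra.
      * intros; apply clamp2_lip.
    + eapply jcont_ext; [| refine (jcont_comp H2 (fun x _ => x) (fun s => clamp (2*s + -1)) 2 HC2 _ _ _ _)].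
      * intros t s Hs; simpl. rewrite set0_id; auto.
      * aff.
      * intros; apply clamp_in.
      * lra.
      * intros; apply clamp2_lip.
    + intros t s Hs Hz. simpl in Hz. replace s with (1/2) by lra.
      rewrite clamp_ge1 by lra. rewrite clamp_le0 by lra. rewrite H11, H20; auto.
  - intros t; simpl. destruct Rle_dec; [|lra]. rewrite clamp_le0 by lra; auto.
  - intros t; simpl. destruct Rle_dec; [lra|]. rewrite clamp_ge1 by lra; auto.
  - intros t s Hs Hb; simpl. destruct Rle_dec; [apply HB1 | apply HB2]; auto; apply clamp_in.
Qed.

Lemma loop_x0_0 f t : is_loop d n x0 f -> f (set0 t 0) = x0.
Proof. intros [_ H]; apply H, bnd0. Qed.
Lemma loop_x0_1 f t : is_loop d n x0 f -> f (set0 t 1) = x0.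
Proof. intros [_ H]; apply H, bnd1. Qed.

Definition P3R (F1 F2 F3 : cube n -> R -> X) (t : cube n) (s : R) : X :=
  if Rle_dec (cpt t 0 - 1/3) 0 then F1 (set0 t (3 * cpt t 0)) s
  else if Rle_dec (cpt t 0 - 2/3) 0 then F2 (set0 t (3 * cpt t 0 - 1)) s
  else F3 (set0 t (3 * cpt t 0 - 2)) s.

Lemma P3R_jcont F1 F2 F3 : jcont F1 -> jcont F2 -> jcont F3 ->
  (forall t s, 0 <= s <= 1 -> F1 (set0 t 1) s = F2 (set0 t 0) s) ->
  (forall t s, 0 <= s <= 1 -> F2 (set0 t 1) s = F3 (set0 t 0) s) ->
  jcont (P3R F1 F2 F3).
Proof.
  intros H1 H2 H3 S12 S23. unfold P3R.
  apply (jcont_paste (fun x _ => x - 1/3)); [aff | | |].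
  - apply (jcont_comp_id F1 (fun x _ => 3 * x)); auto; aff.
  - apply (jcont_paste (fun x _ => x - 2/3)); [aff | | |].
    + apply (jcont_comp_id F2 (fun x _ => 3 * x - 1)); auto; aff.
    + apply (jcont_comp_id F3 (fun x _ => 3 * x - 2)); auto; aff.
    + intros t s Hs Hz; simpl in Hz. replace (cpt t 0) with (2/3) by lra.
      replace (3 * (2/3) - 1) with 1 by field. replace (3 * (2/3) - 2) with 0 by field. auto.
  - intros t s Hs Hz; simpl in Hz. replace (cpt t 0) with (1/3) by lra.
    destruct Rle_dec; [|lra].
    replace (3 * (1/3) - 1) with 0 by field. replace (3 * (1/3)) with 1 by field. auto.
Qed.

Lemma P3R_bnd F1 F2 F3 : bsidep F1 -> bsidep F2 -> bsidep F3 ->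
  (forall t s, 0 <= s <= 1 -> F1 (set0 t 0) s = x0) ->
  (forall t s, 0 <= s <= 1 -> F3 (set0 t 1) s = x0) ->
  bndp (P3R F1 F2 F3).
Proof.
  intros B1 B2 B3 E1 E3 t s Hs Hb. unfold P3R.
  destruct (bnd_cases t Hb) as [Z|[O|Sd]].
  - rewrite Z. destruct Rle_dec; [|lra]. replace (3*0) with 0 by ring. auto.
  - rewrite O. destruct Rle_dec; [lra|]. destruct Rle_dec; [lra|].
    replace (3*1-2) with 1 by ring. auto.
  - destruct Rle_dec; [apply B1; auto; apply bside_set0; auto|].
    destruct Rle_dec; [apply B2 | apply B3]; auto; apply bside_set0; auto.
Qed.

Lemma P3R_ext F1 F2 F3 G1 G2 G3 s s' :
  (forall t, F1 t s = G1 t s') -> (forall t, F2 t s = G2 t s') -> (forall t, F3 t s = G3 t s') ->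
  forall t, P3R F1 F2 F3 t s = P3R G1 G2 G3 t s'.
Proof. intros E1 E2 E3 t; unfold P3R; repeat destruct Rle_dec; auto. Qed.

Definition C2R (F1 F2 : cube n -> R -> X) (t : cube n) (s : R) : X :=
  if Rle_dec (cpt t 0 - 1/2) 0 then F1 (set0 t (2 * cpt t 0)) s
  else F2 (set0 t (2 * cpt t 0 - 1)) s.

Lemma C2R_jcont F1 F2 : jcont F1 -> jcont F2 ->
  (forall t s, 0 <= s <= 1 -> F1 (set0 t 1) s = F2 (set0 t 0) s) ->
  jcont (C2R F1 F2).
Proof.
  intros H1 H2 S12. unfold C2R.
  apply (jcont_paste (fun x _ => x - 1/2)); [aff | | |].
  - apply (jcont_comp_id F1 (fun x _ => 2 * x)); auto; aff.
  - apply (jcont_comp_id F2 (fun x _ => 2 * x - 1)); auto; aff.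
  - intros t s Hs Hz; simpl in Hz. replace (cpt t 0) with (1/2) by lra.
    replace (2 * (1/2) - 1) with 0 by field. replace (2 * (1/2)) with 1 by field. auto.
Qed.

Lemma C2R_bnd F1 F2 : bsidep F1 -> bsidep F2 ->
  (forall t s, 0 <= s <= 1 -> F1 (set0 t 0) s = x0) ->
  (forall t s, 0 <= s <= 1 -> F2 (set0 t 1) s = x0) ->
  bndp (C2R F1 F2).
Proof.
  intros B1 B2 E1 E2 t s Hs Hb. unfold C2R.
  destruct (bnd_cases t Hb) as [Z|[O|Sd]].
  - rewrite Z. destruct Rle_dec; [|lra]. replace (2*0) with 0 by ring. auto.
  - rewrite O. destruct Rle_dec; [lra|]. replace (2*1-1) with 1 by ring. auto.
  - destruct Rle_dec; [apply B1 | apply B2]; auto; apply bside_set0; auto.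
Qed.

Lemma C2R_ext F1 F2 G1 G2 s s' :
  (forall t, F1 t s = G1 t s') -> (forall t, F2 t s = G2 t s') ->
  forall t, C2R F1 F2 t s = C2R G1 G2 t s'.
Proof. intros E1 E2 t; unfold C2R; repeat destruct Rle_dec; auto. Qed.

Definition revR (F : cube n -> R -> X) (t : cube n) (s : R) : X := F (set0 t (1 - cpt t 0)) s.

Lemma revR_jcont F : jcont F -> jcont (revR F).
Proof. intros HF. unfold revR. apply (jcont_comp_id F (fun x _ => 1 - x)); auto; aff. Qed.

Lemma revR_bnd F : bndp F -> bndp (revR F).
Proof.
  intros B t s Hs Hb. unfold revR. apply B; auto.
  destruct (bnd_cases t Hb) as [Z|[O|Sd]].
  - rewrite Z, Rminus_0_r. apply bnd1.
  - rewrite O, Rminus_diag. apply bnd0.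
  - apply bside_bnd, bside_set0; auto.
Qed.

Definition Kf (f : cube n -> X) : cube n -> R -> X := fun t _ => f t.
Definition P3L f g h (t : cube n) : X := P3R (Kf f) (Kf g) (Kf h) t 0.
Definition C2L f g (t : cube n) : X := C2R (Kf f) (Kf g) t 0.
Definition revL (f : cube n -> X) (t : cube n) : X := f (set0 t (1 - cpt t 0)).

Lemma revL_loop f : is_loop d n x0 f -> is_loop d n x0 (revL f).
Proof.
  intros Hf. exact (loop_slice (revR (Kf f)) 0 (revR_jcont _ (loop_jcont f Hf))
     (revR_bnd _ (loop_bndp f Hf)) ltac:(lra)).
Qed.

Lemma P3L_loop f g h : is_loop d n x0 f -> is_loop d n x0 g -> is_loop d n x0 h ->
  is_loop d n x0 (P3L f g h).
Proof.
  intros Hf Hg Hh. unfold P3L. apply loop_slice; [| |lra].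
  - apply P3R_jcont; try apply loop_jcont; auto; intros; unfold Kf;
      rewrite loop_x0_0, loop_x0_1; auto.
  - apply P3R_bnd; try apply loop_bsidep; auto; intros; unfold Kf;
      first [apply loop_x0_0 | apply loop_x0_1]; auto.
Qed.

Lemma C2L_loop f g : is_loop d n x0 f -> is_loop d n x0 g -> is_loop d n x0 (C2L f g).
Proof.
  intros Hf Hg. unfold C2L. apply loop_slice; [| |lra].
  - apply C2R_jcont; try apply loop_jcont; auto; intros; unfold Kf;
      rewrite loop_x0_0, loop_x0_1; auto.
  - apply C2R_bnd; try apply loop_bsidep; auto; intros; unfold Kf;
      first [apply loop_x0_0 | apply loop_x0_1]; auto.
Qed.


Lemma loop_le0 f t v : is_loop d n x0 f -> v <= 0 -> f (set0 t v) = x0.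
Proof. intros Hf Hv; rewrite set0_le0 by auto; apply loop_x0_0; auto. Qed.
Lemma loop_ge1 f t v : is_loop d n x0 f -> 1 <= v -> f (set0 t v) = x0.
Proof. intros Hf Hv; rewrite set0_ge1 by auto; apply loop_x0_1; auto. Qed.
Lemma loop_id (f : cube n -> X) t v : v = cpt t 0 -> f (set0 t v) = f t.
Proof. intros ->; rewrite set0_id; auto. Qed.
Lemma loop_bside f t v : is_loop d n x0 f -> bside t -> f (set0 t v) = x0.
Proof. intros [_ Hf] Hb; apply Hf, bside_bnd, bside_set0; auto. Qed.
Lemma f_set0 (f : cube n -> X) t v w : v = w -> f (set0 t v) = f (set0 t w).
Proof. intros ->; auto. Qed.

Lemma hom_bsidep H : bndp H -> bsidep H.
Proof. apply bndp_bsidep. Qed.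

Lemma hom_loop f g : hom f g -> is_loop d n x0 f.
Proof.
  intros [H [HC [H0 [H1 HB]]]].
  assert (E : forall t, H t 0 = f t) by auto.
  pose proof (loop_slice H 0 HC HB ltac:(lra)) as L.
  split; [intros t eps He; destruct (proj1 L t eps He) as [del [? P]]; exists del; split; auto;
    intros; rewrite <- !E; apply P; auto|].
  intros t Ht; rewrite <- E; apply HB; auto; lra.
Qed.

Lemma hom_P3 f f' g g' h h' : hom f f' -> hom g g' -> hom h h' -> hom (P3L f g h) (P3L f' g' h').
Proof.
  intros [H1 [C1 [A1 [B1 D1]]]] [H2 [C2 [A2 [B2 D2]]]] [H3 [C3 [A3 [B3 D3]]]].
  exists (P3R H1 H2 H3). split; [|split; [|split]].
  - apply P3R_jcont; auto; intros; (transitivity x0; [|symmetry]);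
      first [apply D1|apply D2|apply D3]; auto using bnd0, bnd1.
  - apply P3R_ext; intros; unfold Kf; auto.
  - apply P3R_ext; intros; unfold Kf; auto.
  - apply P3R_bnd; try apply hom_bsidep; auto; intros;
      [apply D1 | apply D3]; auto using bnd0, bnd1.
Qed.

Lemma hom_C2 f f' g g' : hom f f' -> hom g g' -> hom (C2L f g) (C2L f' g').
Proof.
  intros [H1 [C1 [A1 [B1 D1]]]] [H2 [C2 [A2 [B2 D2]]]].
  exists (C2R H1 H2). split; [|split; [|split]].
  - apply C2R_jcont; auto; intros; (transitivity x0; [|symmetry]);
      first [apply D1|apply D2]; auto using bnd0, bnd1.
  - apply C2R_ext; intros; unfold Kf; auto.
  - apply C2R_ext; intros; unfold Kf; auto.
  - apply C2R_bnd; try apply hom_bsidep; auto; intros;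
      [apply D1 | apply D2]; auto using bnd0, bnd1.
Qed.

Lemma hom_rev f f' : hom f f' -> hom (revL f) (revL f').
Proof.
  intros [H1 [C1 [A1 [B1 D1]]]].
  exists (revR H1). split; [|split; [|split]].
  - apply revR_jcont; auto.
  - intros; unfold revR, revL; auto.
  - intros; unfold revR, revL; auto.
  - apply revR_bnd; auto.
Qed.

Lemma hom_refl f : is_loop d n x0 f -> hom f f.
Proof. intros; apply hom_eq; auto. Qed.

Definition cx : cube n -> X := fun _ => x0.

Lemma hom_cancel_r a b : is_loop d n x0 a -> is_loop d n x0 b -> hom (P3L a (revL b) b) a.
Proof.
  intros Ha Hb. apply hom_trans with (P3L a cx cx).
  - exists (P3R (Kf a) (fun t s => Kf b (set0 t ((fun x s => 1 - (1-s)*x) (cpt t 0) s)) s)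
                       (fun t s => Kf b (set0 t ((fun x s => 1 - (1-s)*(1-x)) (cpt t 0) s)) s)).
    split; [|split; [|split]].
    + apply P3R_jcont.
      * apply loop_jcont; auto.
      * apply (jcont_comp_id (Kf b) (fun x s => 1 - (1-s)*x)); [apply loop_jcont; auto| aff].
      * apply (jcont_comp_id (Kf b) (fun x s => 1 - (1-s)*(1-x))); [apply loop_jcont; auto| aff].
      * intros t s Hs; unfold Kf. rewrite set0_set0, cpt_set0_0, (clamp_le0 0) by lra.
        rewrite loop_x0_1 by auto. rewrite loop_ge1; auto. lra.
      * intros t s Hs; unfold Kf. rewrite !set0_set0, !cpt_set0_0, (clamp_le0 0), (clamp_ge1 1) by lra.
        apply f_set0; ring.
    + apply P3R_ext; intros t; unfold Kf, revL; auto.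
      * apply f_set0; ring.
      * apply loop_id; ring.
    + apply P3R_ext; intros t; unfold Kf, cx; try reflexivity; apply loop_ge1; auto; cbv beta; lra.
    + apply P3R_bnd.
      * apply loop_bsidep; auto.
      * intros t s Hs Hs'; unfold Kf; apply loop_bside; auto.
      * intros t s Hs Hs'; unfold Kf; apply loop_bside; auto.
      * intros; unfold Kf; apply loop_x0_0; auto.
      * intros t s Hs; unfold Kf. rewrite set0_set0, cpt_set0_0, (clamp_ge1 1) by lra.
        apply loop_ge1; auto; lra.
  - exists (fun t s => Kf a (set0 t ((fun x s => 3*x - 2*s*x) (cpt t 0) s)) s).
    split; [|split; [|split]].
    + apply (jcont_comp_id (Kf a) (fun x s => 3*x - 2*s*x)); [apply loop_jcont; auto| aff].
    + intros t; unfold P3L, P3R, Kf, cx. destruct Rle_dec.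
      * apply f_set0; ring.
      * destruct Rle_dec; apply loop_ge1; auto; lra.
    + intros t; unfold Kf; apply loop_id; ring.
    + intros t s Hs Hbd; unfold Kf. destruct (bnd_cases t Hbd) as [Z|[O|Sd]].
      * rewrite Z; apply loop_le0; auto; lra.
      * rewrite O; apply loop_ge1; auto; lra.
      * apply loop_bside; auto.
Qed.

Lemma hom_cancel_l b c : is_loop d n x0 b -> is_loop d n x0 c -> hom (P3L b (revL b) c) c.
Proof.
  intros Hb Hc. apply hom_trans with (P3L cx cx c).
  - exists (P3R (fun t s => Kf b (set0 t ((fun x s => (1-s)*x) (cpt t 0) s)) s)
                (fun t s => Kf b (set0 t ((fun x s => (1-s)*(1-x)) (cpt t 0) s)) s) (Kf c)).
    split; [|split; [|split]].
    + apply P3R_jcont.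
      * apply (jcont_comp_id (Kf b) (fun x s => (1-s)*x)); [apply loop_jcont; auto| aff].
      * apply (jcont_comp_id (Kf b) (fun x s => (1-s)*(1-x))); [apply loop_jcont; auto| aff].
      * apply loop_jcont; auto.
      * intros t s Hs; unfold Kf. rewrite !set0_set0, !cpt_set0_0, (clamp_le0 0), (clamp_ge1 1) by lra.
        apply f_set0; ring.
      * intros t s Hs; unfold Kf. rewrite set0_set0, cpt_set0_0, (clamp_ge1 1) by lra.
        rewrite loop_x0_0 by auto. apply loop_le0; auto; lra.
    + apply P3R_ext; intros t; unfold Kf, revL; auto.
      * apply loop_id; ring.
      * apply f_set0; ring.
    + apply P3R_ext; intros t; unfold Kf, cx; try reflexivity; apply loop_le0; auto; cbv beta; lra.
    + apply P3R_bnd.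
      * intros t s Hs Hs'; unfold Kf; apply loop_bside; auto.
      * intros t s Hs Hs'; unfold Kf; apply loop_bside; auto.
      * apply loop_bsidep; auto.
      * intros t s Hs; unfold Kf. rewrite set0_set0, cpt_set0_0, (clamp_le0 0) by lra.
        apply loop_le0; auto; lra.
      * intros; unfold Kf; apply loop_x0_1; auto.
  - exists (fun t s => Kf c (set0 t ((fun x s => 3*x - 2 - 2*s*x + 2*s) (cpt t 0) s)) s).
    split; [|split; [|split]].
    + apply (jcont_comp_id (Kf c) (fun x s => 3*x - 2 - 2*s*x + 2*s)); [apply loop_jcont; auto| aff].
    + intros t; unfold P3L, P3R, Kf, cx. destruct Rle_dec.
      * apply loop_le0; auto; lra.
      * destruct Rle_dec; [apply loop_le0; auto; lra|]. apply f_set0; ring.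
    + intros t; unfold Kf; apply loop_id; ring.
    + intros t s Hs Hbd; unfold Kf. destruct (bnd_cases t Hbd) as [Z|[O|Sd]].
      * rewrite Z; apply loop_le0; auto; lra.
      * rewrite O; apply loop_ge1; auto; lra.
      * apply loop_bside; auto.
Qed.


Definition zcube : cube n.
Proof. refine (exist _ (fun _ => 0) _). intros i; split; intros; lra. Defined.

Definition Om (f : cube n -> X) (H : is_loop d n x0 f) : Omega d n x0 := exist _ f H.

Lemma oval_loop (a : Omega d n x0) : is_loop d n x0 (oval a).
Proof. exact (proj2_sig a). Qed.

Lemma mu_fin (a b : Omega d n x0) M : (forall t, d (oval a t) (oval b t) <= M) ->
  exists r, mu a b = Finite r /\ r <= M.
Proof.
  intros HM. unfold mu.
  destruct (Lub_Rbar_correct (fun r => exists t : cube n, r = d (oval a t) (oval b t))) as [ub lub].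
  assert (H1 : Rbar_le (Finite (d (oval a zcube) (oval b zcube)))
     (Lub_Rbar (fun r => exists t : cube n, r = d (oval a t) (oval b t)))).
  { apply ub. exists zcube; auto. }
  assert (H2 : Rbar_le (Lub_Rbar (fun r => exists t : cube n, r = d (oval a t) (oval b t))) (Finite M)).
  { apply lub. intros x [t ->]. simpl. auto. }
  destruct (Lub_Rbar _) as [r| |]; simpl in H1, H2; try contradiction.
  exists r; split; auto.
Qed.

Lemma mu_ub (a b : Omega d n x0) r : mu a b = Finite r -> forall t, d (oval a t) (oval b t) <= r.
Proof.
  intros E t. unfold mu in E.
  destruct (Lub_Rbar_correct (fun r => exists t : cube n, r = d (oval a t) (oval b t))) as [ub _].
  assert (H := ub (d (oval a t) (oval b t)) (ex_intro _ t eq_refl)). rewrite E in H. exact H.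
Qed.

Lemma mu_not_m (a b : Omega d n x0) : mu a b <> m_infty.
Proof.
  intros E. unfold mu in E.
  destruct (Lub_Rbar_correct (fun r => exists t : cube n, r = d (oval a t) (oval b t))) as [ub _].
  assert (H := ub (d (oval a zcube) (oval b zcube)) (ex_intro _ zcube eq_refl)). rewrite E in H. exact H.
Qed.

Lemma rho_intro (A B : pin d n x0) a b r eps : pmem A a -> pmem B b -> mu a b = Finite r -> r < eps ->
  Rbar_lt (rho A B) (Finite eps).
Proof.
  intros Ha Hb Hm Hr. unfold rho.
  destruct (Glb_Rbar_correct (fun r => exists a b, pmem A a /\ pmem B b /\ mu a b = Finite r)) as [lb _].
  assert (H := lb r (ex_intro _ a (ex_intro _ b (conj Ha (conj Hb Hm))))).
  eapply Rbar_le_lt_trans; [exact H| simpl; exact Hr].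
Qed.

Lemma rho_elim (A B : pin d n x0) eps : Rbar_lt (rho A B) (Finite eps) ->
  exists a b r, pmem A a /\ pmem B b /\ mu a b = Finite r /\ r < eps.
Proof.
  intros H. apply NNPP; intros Hno. unfold rho in H.
  destruct (Glb_Rbar_correct (fun r => exists a b, pmem A a /\ pmem B b /\ mu a b = Finite r)) as [_ glb].
  assert (Hle : Rbar_le (Finite eps)
     (Glb_Rbar (fun r => exists a b, pmem A a /\ pmem B b /\ mu a b = Finite r))).
  { apply glb. intros x [a [b [Ha [Hb Hm]]]]. simpl. apply Rnot_lt_le. intros Hx.
    apply Hno. exists a, b, x; auto. }
  exact (Rbar_lt_not_le _ _ H Hle).
Qed.

Lemma pmem_hom (A : pin d n x0) a b : pmem A a -> pmem A b -> hom (oval a) (oval b).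
Proof.
  destruct A as [P [a0 ->]]; unfold pmem; simpl; intros Ha Hb.
  apply homotopic_hom in Ha, Hb. eapply hom_trans; [apply hom_sym|]; eauto.
Qed.

Lemma pmem_step (A : pin d n x0) a b : pmem A a -> hom (oval a) (oval b) -> pmem A b.
Proof.
  destruct A as [P [a0 ->]]; unfold pmem; simpl; intros Ha Hb.
  apply hom_homotopic. apply homotopic_hom in Ha. eapply hom_trans; eauto.
Qed.

Lemma pin_rep (A : pin d n x0) : exists a, pmem A a.
Proof.
  destruct A as [P [a0 ->]]; exists a0; unfold pmem; simpl.
  apply hom_homotopic, hom_refl, oval_loop.
Qed.

Lemma pmem_piproj a : pmem (piproj d n x0 a) a.
Proof. unfold pmem, piproj; simpl. apply hom_homotopic, hom_refl, oval_loop. Qed.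

Lemma mu_nonneg (a b : Omega d n x0) r : mu a b = Finite r -> 0 <= r.
Proof. intros E; eapply Rle_trans; [apply (dist_pos (oval a zcube) (oval b zcube))| apply (mu_ub a b r E)]. Qed.

Lemma rho_ultra (A B C : pin d n x0) eps : Rbar_lt (rho A B) (Finite eps) ->
  Rbar_lt (rho B C) (Finite eps) -> Rbar_lt (rho A C) (Finite eps).
Proof.
  intros H1 H2.
  destruct (rho_elim _ _ _ H1) as [a [b [r1 [Ha [Hb [Hm1 Hr1]]]]]].
  destruct (rho_elim _ _ _ H2) as [b' [c [r2 [Hb' [Hc [Hm2 Hr2]]]]]].
  pose proof (oval_loop a) as La. pose proof (oval_loop b) as Lb.
  pose proof (oval_loop b') as Lb'. pose proof (oval_loop c) as Lc.
  assert (Lf : is_loop d n x0 (P3L (oval a) (revL (oval b)) (oval b')))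
    by (apply P3L_loop; auto; apply revL_loop; auto).
  assert (Lg : is_loop d n x0 (P3L (oval b) (revL (oval b)) (oval c)))
    by (apply P3L_loop; auto; apply revL_loop; auto).
  assert (Hbb : hom (oval b') (oval b)) by (apply (pmem_hom B); auto).
  assert (HA : pmem A (Om _ Lf)).
  { apply (pmem_step A a); auto. simpl. apply hom_sym. eapply hom_trans.
    - apply hom_P3; [apply hom_refl; auto| apply hom_refl, revL_loop; auto| exact Hbb].
    - apply hom_cancel_r; auto. }
  assert (HC : pmem C (Om _ Lg)).
  { apply (pmem_step C c); auto. simpl. apply hom_sym, hom_cancel_l; auto. }
  destruct (mu_fin (Om _ Lf) (Om _ Lg) (Rmax r1 r2)) as [r [Hm Hr]].
  { intros t; simpl. unfold P3L, P3R, Kf.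
    pose proof (mu_nonneg _ _ _ Hm1). pose proof (mu_nonneg _ _ _ Hm2).
    destruct Rle_dec; [|destruct Rle_dec].
    - eapply Rle_trans; [apply (mu_ub a b r1 Hm1)| apply Rmax_l].
    - rewrite dist_refl. eapply Rle_trans; [|apply Rmax_l]; auto.
    - eapply Rle_trans; [apply (mu_ub b' c r2 Hm2)| apply Rmax_r]. }
  apply (rho_intro A C _ _ r eps HA HC Hm). eapply Rle_lt_trans; [exact Hr|].
  apply Rmax_lub_lt; auto.
Qed.

Definition ball (A : pin d n x0) (e : R) : pin d n x0 -> Prop := fun B => Rbar_lt (rho A B) (Finite e).

Lemma ball_open A e : 0 < e -> rho_open d n x0 (ball A e).
Proof.
  intros He B HB. exists e; split; auto. intros C HC. unfold ball in *. eapply rho_ultra; eauto.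
Qed.

Lemma ball_center A e : 0 < e -> ball A e A.
Proof.
  intros He. destruct (pin_rep A) as [a Ha].
  destruct (mu_fin a a 0) as [r [Hm Hr]]; [intros; rewrite dist_refl; lra|].
  apply (rho_intro A A a a r e Ha Ha Hm); lra.
Qed.

Lemma concat_eq f g h : is_concat f g h -> forall t, h t = C2L f g t.
Proof.
  intros Hc t. unfold C2L, C2R, Kf. pose proof (t0_range t).
  assert (Ho : forall v i, i <> 0%nat -> cpt (set0 t v) i = cpt t i)
    by (intros v [|k] Hk; [congruence | reflexivity]).
  destruct Rle_dec.
  - apply (proj1 (Hc t (set0 t (2 * cpt t 0)) (Ho _))); [lra|]. apply set0_in; lra.
  - apply (proj2 (Hc t (set0 t (2 * cpt t 0 - 1)) (Ho _))); [lra|]. apply set0_in; lra.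
Qed.

Lemma rev_eq f h : is_rev f h -> forall t, h t = revL f t.
Proof.
  intros Hc t. unfold revL. pose proof (t0_range t).
  assert (Ho : forall v i, i <> 0%nat -> cpt (set0 t v) i = cpt t i)
    by (intros v [|k] Hk; [congruence | reflexivity]).
  apply (Hc t (set0 t (1 - cpt t 0)) (Ho _)). apply set0_in; lra.
Qed.

Lemma rho_topology : is_topology (rho_open d n x0).
Proof.
  split; [|split; [|split]].
  - intros A _; exists 1; split; [lra| auto].
  - intros A [].
  - intros U V HU HV A [HA1 HA2].
    destruct (HU A HA1) as [e1 [He1 P1]]. destruct (HV A HA2) as [e2 [He2 P2]].
    exists (Rmin e1 e2); split; [apply Rmin_pos; auto|]. intros B HB; split.
    + apply P1. eapply Rbar_lt_le_trans; [exact HB| simpl; apply Rmin_l].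
    + apply P2. eapply Rbar_lt_le_trans; [exact HB| simpl; apply Rmin_r].
  - intros S HS A [U [HSU HUA]]. destruct (HS U HSU A HUA) as [e [He P]].
    exists e; split; auto. intros B HB; exists U; split; auto.
Qed.

Lemma part1 (U : pin d n x0 -> Prop) : rho_open d n x0 U -> Omega_open d n x0 (fun a => U (piproj d n x0 a)).
Proof.
  intros HU a HUa. destruct (HU _ HUa) as [e [He P]]. exists e; split; auto. intros b Hab. apply P.
  destruct (mu a b) as [r| |] eqn:E.
  - apply (rho_intro _ _ a b r e (pmem_piproj a) (pmem_piproj b) E). exact Hab.
  - simpl in Hab; contradiction.
  - exfalso; apply (mu_not_m a b E).
Qed.

Lemma rho_group : group_topology d n x0 (rho_open d n x0).
Proof.
  split; [apply rho_topology| split].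
  - intros A B C [a [b [c [Ha [Hb [Hc Hcat]]]]]] W HW HWC.
    destruct (HW C HWC) as [e [He PW]].
    exists (ball A e), (ball B e).
    split; [apply ball_open; auto|]. split; [apply ball_open; auto|].
    split; [apply ball_center; auto|]. split; [apply ball_center; auto|].
    intros A' B' C' HA' HB' [a' [b' [c' [Ha' [Hb' [Hc' Hcat']]]]]].
    apply PW.
    destruct (rho_elim _ _ _ HA') as [a1 [a1' [r1 [Ha1 [Ha1' [Hm1 Hr1]]]]]].
    destruct (rho_elim _ _ _ HB') as [b1 [b1' [r2 [Hb1 [Hb1' [Hm2 Hr2]]]]]].
    assert (L1 : is_loop d n x0 (C2L (oval a1) (oval b1))) by (apply C2L_loop; apply oval_loop).
    assert (L2 : is_loop d n x0 (C2L (oval a1') (oval b1'))) by (apply C2L_loop; apply oval_loop).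
    assert (HC1 : pmem C (Om _ L1)).
    { apply (pmem_step C c); auto. simpl. eapply hom_trans.
      - apply hom_eq; [apply oval_loop| apply concat_eq; eauto].
      - apply hom_C2; [apply (pmem_hom A) | apply (pmem_hom B)]; auto. }
    assert (HC2 : pmem C' (Om _ L2)).
    { apply (pmem_step C' c'); auto. simpl. eapply hom_trans.
      - apply hom_eq; [apply oval_loop| apply concat_eq; eauto].
      - apply hom_C2; [apply (pmem_hom A') | apply (pmem_hom B')]; auto. }
    destruct (mu_fin (Om _ L1) (Om _ L2) (Rmax r1 r2)) as [r [Hm Hr]].
    { intros t; simpl. unfold C2L, C2R, Kf. destruct Rle_dec.
      - eapply Rle_trans; [apply (mu_ub _ _ r1 Hm1)| apply Rmax_l].
      - eapply Rle_trans; [apply (mu_ub _ _ r2 Hm2)| apply Rmax_r]. }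
    apply (rho_intro C C' _ _ r e HC1 HC2 Hm). eapply Rle_lt_trans; [exact Hr|].
    apply Rmax_lub_lt; auto.
  - intros A C [a [c [Ha [Hc Hrev]]]] W HW HWC.
    destruct (HW C HWC) as [e [He PW]].
    exists (ball A e).
    split; [apply ball_open; auto|]. split; [apply ball_center; auto|].
    intros A' C' HA' [a' [c' [Ha' [Hc' Hrev']]]].
    apply PW.
    destruct (rho_elim _ _ _ HA') as [a1 [a1' [r1 [Ha1 [Ha1' [Hm1 Hr1]]]]]].
    assert (L1 : is_loop d n x0 (revL (oval a1))) by (apply revL_loop; apply oval_loop).
    assert (L2 : is_loop d n x0 (revL (oval a1'))) by (apply revL_loop; apply oval_loop).
    assert (HC1 : pmem C (Om _ L1)).
    { apply (pmem_step C c); auto. simpl. eapply hom_trans.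
      - apply hom_eq; [apply oval_loop| apply rev_eq; eauto].
      - apply hom_rev; apply (pmem_hom A); auto. }
    assert (HC2 : pmem C' (Om _ L2)).
    { apply (pmem_step C' c'); auto. simpl. eapply hom_trans.
      - apply hom_eq; [apply oval_loop| apply rev_eq; eauto].
      - apply hom_rev; apply (pmem_hom A'); auto. }
    destruct (mu_fin (Om _ L1) (Om _ L2) r1) as [r [Hm Hr]].
    { intros t; simpl. unfold revL. apply (mu_ub _ _ r1 Hm1). }
    apply (rho_intro C C' _ _ r e HC1 HC2 Hm). lra.
Qed.

Lemma main_sec :
  (forall U : pin d n x0 -> Prop, rho_open d n x0 U ->
     Omega_open d n x0 (fun a => U (piproj d n x0 a))) /\
  (forall U : pin d n x0 -> Prop, rho_open d n x0 U -> quotient_open d n x0 U) /\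
  (forall U : pin d n x0 -> Prop, rho_open d n x0 U -> tau_open d n x0 U).
Proof.
  split; [exact part1|split; [exact part1|]].
  intros U HU. apply gen_base. exists (rho_open d n x0).
  split; [apply rho_group|split; [intros W HW; apply part1; auto| auto]].
Qed.

End S.

Theorem proposition4p13 (X : Type) (d : X -> X -> R) (x0 : X) (n : nat) :
  is_metric d -> path_connected d -> (1 <= n)%nat ->
  (forall U : pin d n x0 -> Prop, rho_open d n x0 U ->
     Omega_open d n x0 (fun a => U (piproj d n x0 a))) /\
  (forall U : pin d n x0 -> Prop, rho_open d n x0 U -> quotient_open d n x0 U) /\
  (forall U : pin d n x0 -> Prop, rho_open d n x0 U -> tau_open d n x0 U).
Proof.
  intros Hd _ Hn. exact (main_sec d x0 n Hn Hd).
Qed.
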